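(* For $\alpha\in\mathbb{S}_m$ and $\beta\in\mathbb{S}_{m'}$ let $\alpha\#\beta\in\mathbb{S}_{m+m'}$ be the concatenation ($\alpha$ acting on $\{1,\dots,m\}$ and $\beta$ shifted to act on $\{m+1,\dots,m+m'\}$). Then the class of $\alpha\#\beta$ in $\mathcal{H}_{m+m'}$ depends only on the classes of $\alpha$ in $\mathcal{H}_m$ and $\beta$ in $\mathcal{H}_{m'}$; in particular it does not depend on the choice of hyper arc diagrams (cyclic shifts $\sigma_m^{-k}\alpha\sigma_m^k$, $\sigma_{m'}^{-l}\beta\sigma_{m'}^l$) representing the hyper chord diagrams. Hence concatenation induces a well-defined bilinear product $\mathcal{H}_m\otimes\mathcal{H}_{m'}\to\mathcal{H}_{m+m'}$.
   Context: $\sigma_m=(1,\dots,m)$. $\mathcal{H}_m=\mathbb{C}[\mathbb{S}_m]/\mathcal{V}_m$, where $\mathcal{V}_m$ is the span of all generalized Vassiliev elements in $\mathbb{C}[\mathbb{S}_m]$ ($\mathcal{H}_0=\mathcal{H}_1=\mathbb{C}$). Generalized Vassiliev elements: let $m\ge2$, $\gamma\in\mathbb{S}_{m-1}$, $q\in[m-1]\cup\{*\}$. For $t\in\{0,\dots,m-1\}$ let $\alpha_t\in\mathbb{S}_m$ be obtained by inserting a new point $x$ (free leg) into the line $1<\dots<m-1$ in the gap between $t$ and $t+1$, relabeling all points $1,\dots,m$ in order, letting the permutation act as $\gamma$ on old points except $q\mapsto x\mapsto\gamma(q)$ if $q\ne*$, and $x$ fixed if $q=*$. For a cycle $v$ of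 $\gamma$, $E(\gamma,q,v)=\sum_{j\in v}(\alpha_{j-1}-\alpha_j)$. *)

(* Defs.v *)
From mathcomp Require Import all_boot all_order all_fingroup all_algebra all_field.
Set Implicit Arguments. Unset Strict Implicit. Unset Printing Implicit Defensive.
Import GRing.Theory.
Local Open Scope ring_scope.

(* Points 1..m are encoded as 'I_m = {0,..,m-1}; S_m is 'S_m. *)
(* The group algebra C[S_m] is {ffun 'S_m -> algC} (coefficient functions). *)
Definition gpalg (m : nat) := {ffun 'S_m -> algC}.

Definition pt (m : nat) (a : 'S_m) : gpalg m := [ffun s => ((s == a)%:R : algC)].

(* sigma_m = (1,...,m) : i |-> i+1 (mod m); ordS is exactly this cyclic successor. *)
Lemma ordS_inj m : injective (@ordS m).
Proof. exact: (can_inj (@ordSK m)). Qed.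
Definition sigma (m : nat) : 'S_m := perm (@ordS_inj m).

(* alpha_t for gamma in S_n (n = m-1), q in [n] or star (None = star), t a gap in I_(n+1):
   the new point x sits at position t, old point i goes to lift t i. *)
Definition alpha_t (n : nat) (g : 'S_n) (q : option 'I_n) (t : 'I_(n.+1)) : 'S_(n.+1) :=
  match q with
  | None => lift_perm t t g
  | Some q0 => (tperm t (lift t q0) * lift_perm t t g)%g
  end.

(* gap "j-1" and gap "j" for the (0-indexed) old point i = j-1 *)
Definition gap_before (n : nat) (i : 'I_n) : 'I_(n.+1) := widen_ord (leqnSn n) i.
Definition gap_after (n : nat) (i : 'I_n) : 'I_(n.+1) := lift ord0 i.

Definition vass (n : nat) (g : 'S_n) (q : option 'I_n) (v : {set 'I_n}) : gpalg n.+1 :=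
  [ffun s => \sum_(i in v)
      (pt (alpha_t g q (gap_before i)) s - pt (alpha_t g q (gap_after i)) s)].

Definition inV_S (n : nat) (x : gpalg n.+1) : Prop :=
  exists c : 'S_n -> option 'I_n -> {set 'I_n} -> algC,
    forall s, x s = \sum_(g : 'S_n) \sum_(q : option 'I_n)
                    \sum_(v in porbits g) c g q v * vass g q v s.

(* V_m (V_0 = 0; for m = 1 the family of generators is empty, so V_1 = 0) *)
Definition inV (m : nat) : gpalg m -> Prop :=
  match m with
  | 0 => fun x => x = 0
  | n.+1 => @inV_S n
  end.

(* congruence modulo V_m, i.e. equality in H_m = C[S_m]/V_m *)
Definition eqH (m : nat) (x y : gpalg m) : Prop := inV (x - y).

Definition concat_fun (m m' : nat) (a : 'S_m) (b : 'S_m') (i : 'I_(m + m')) : 'I_(m + m') :=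
  unsplit (match split i with inl j => inl (a j) | inr k => inr (b k) end).

Lemma concat_fun_inj m m' (a : 'S_m) (b : 'S_m') : injective (concat_fun a b).
Proof.
move=> i j; rewrite /concat_fun => /(congr1 split); rewrite !unsplitK => E.
rewrite -(splitK i) -(splitK j); move: E.
case: (split i) => [i1|i2]; case: (split j) => [j1|j2] //.
- by case=> /perm_inj ->.
- by case=> /perm_inj ->.
Qed.

Definition concat (m m' : nat) (a : 'S_m) (b : 'S_m') : 'S_(m + m') :=
  perm (@concat_fun_inj m m' a b).

Definition concatL (m m' : nat) (x : gpalg m) (y : gpalg m') : gpalg (m + m') :=
  [ffun s => \sum_(a : 'S_m) \sum_(b : 'S_m') x a * y b * ((concat a b == s)%:R : algC)].

(* Main.v *)
Require Import Defs.
From mathcomp Require Import all_boot all_order all_fingroup all_algebra all_field.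
From mathcomp Require Import zify ring.
Set Implicit Arguments. Unset Strict Implicit. Unset Printing Implicit Defensive.
Import GRing.Theory.
Local Open Scope ring_scope.

Definition pf N (p : 'S_N) (x : nat) : nat :=
  if (insub x : option 'I_N) is Some y then val (p y) else x.

Lemma pfE N (p : 'S_N) (y : 'I_N) : pf p y = p y.
Proof. by rewrite /pf valK. Qed.

Lemma pf_out N (p : 'S_N) x : (N <= x)%N -> pf p x = x.
Proof. by move=> h; rewrite /pf insubN // -leqNgt. Qed.

Lemma pf_lt N (p : 'S_N) x : (x < N)%N -> (pf p x < N)%N.
Proof. by move=> h; rewrite -[x]/(val (Ordinal h)) pfE. Qed.

Lemma pf_inj N (p p' : 'S_N) : (forall x, (x < N)%N -> pf p x = pf p' x) -> p = p'.
Proof. by move=> h; apply/permP => y; apply: val_inj; rewrite /= -!pfE h. Qed.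

Lemma pfM N (p p' : 'S_N) x : pf (p * p')%g x = pf p' (pf p x).
Proof.
case: (ltnP x N) => h; last by rewrite !pf_out.
by rewrite -[x]/(val (Ordinal h)) !pfE permM.
Qed.

Lemma pf_cast N1 N2 (e : N1 = N2) (p : 'S_N1) x : pf (cast_perm e p) x = pf p x.
Proof. by case: N2 / e; rewrite cast_perm_id. Qed.

Lemma pf_tperm N (i j : 'I_N) x :
  pf (tperm i j) x = if x == i then val j else if x == j then val i else x.
Proof.
case: (ltnP x N) => h; last first.
  rewrite pf_out //; have /negbTE-> : x != i by apply/eqP=> e; move: (ltn_ord i); lia.
  by have /negbTE-> : x != j by apply/eqP=> e; move: (ltn_ord j); lia.
rewrite -[x]/(val (Ordinal h)) pfE permE /= /tperm /=.
by rewrite !(fun_if val) -!val_eqE.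
Qed.

Lemma pf_lift_perm n (i j : 'I_n.+1) (s : 'S_n) x :
  pf (lift_perm i j s) x = if x == i then val j else bump j (pf s (unbump i x)).
Proof.
case: (ltnP x n.+1) => h; last first.
  rewrite !pf_out //.
  - have /negbTE-> : x != i by apply/eqP=> e; move: (ltn_ord i); lia.
    move: (ltn_ord i) (ltn_ord j) h; rewrite /bump /unbump.
    case: (ltnP i x); case: (leqP j (x - 1)); lia.
  - move: (ltn_ord i) h; rewrite /unbump; case: (ltnP i x); lia.
rewrite -[x]/(val (Ordinal h)) pfE.
case: (unliftP i (Ordinal h)) => [k|] ->.
  rewrite lift_perm_lift /= bumpK pfE.
  by have /negbTE -> : bump i k != i by rewrite eq_sym neq_bump.
by rewrite lift_perm_id eqxx.
Qed.

Lemma pf_concat m m' (a : 'S_m) (b : 'S_m') x :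
  pf (concat a b) x = if (x < m)%N then pf a x else (m + pf b (x - m))%N.
Proof.
case: (ltnP x (m + m')) => h; last first.
  rewrite pf_out // ifN -?leqNgt; last lia.
  rewrite pf_out; lia.
rewrite -[x]/(val (Ordinal h)) pfE permE /concat_fun.
case: splitP => [j|k] /= ->; first by rewrite pfE.
by rewrite addKn pfE.
Qed.

Lemma pf_alpha n (g : 'S_n) q (t : 'I_n.+1) x :
  pf (alpha_t g q t) x =
  if x == t then (if q is Some q0 then bump t (g q0) else val t)
  else if omap val q == Some (unbump t x) then val t
  else bump t (pf g (unbump t x)).
Proof.
case: q => [q0|] /=; last by rewrite pf_lift_perm.
rewrite pfM pf_tperm /=.
have [e|ne1] := eqVneq x t.
  rewrite pf_lift_perm; have /negbTE -> : bump t q0 != t by rewrite eq_sym neq_bump.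
  by rewrite bumpK pfE.
have [e2|ne2] := eqVneq x (bump t q0).
  by rewrite pf_lift_perm eqxx e2 bumpK eqxx.
rewrite pf_lift_perm (negbTE ne1).
case: eqP => // -[e]; case/eqP: ne2; rewrite e unbumpK //.
Qed.

Lemma pf_sigma m x : pf (sigma m) x = if (x < m)%N then (x.+1 %% m)%N else x.
Proof.
case: (ltnP x m) => h; last by rewrite pf_out.
by rewrite -[x]/(val (Ordinal h)) pfE permE.
Qed.

Section VS.
Variable n : nat.
Implicit Types x y : gpalg n.+1.

Lemma inV_S_ext x y : (forall s, x s = y s) -> inV_S y -> inV_S x.
Proof. by move=> h; have -> : x = y by apply/ffunP. Qed.

Lemma inV_S0 : inV_S (0 : gpalg n.+1).
Proof. by exists (fun _ _ _ => 0) => s; rewrite ffunE big1 // => g _; rewrite big1 // => q _; rewrite big1 // => v _; rewrite mul0r. Qed.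

Lemma inV_SD x y : inV_S x -> inV_S y -> inV_S (x + y).
Proof.
move=> [c1 h1] [c2 h2]; exists (fun g q v => c1 g q v + c2 g q v) => s.
rewrite ffunE h1 h2 -big_split; apply: eq_bigr => g _.
rewrite -big_split; apply: eq_bigr => q _.
by rewrite -big_split; apply: eq_bigr => v _; rewrite mulrDl.
Qed.

Lemma inV_SZ k x : inV_S x -> inV_S [ffun s => k * x s].
Proof.
move=> [c h]; exists (fun g q v => k * c g q v) => s.
rewrite ffunE h mulr_sumr; apply: eq_bigr => g _.
rewrite mulr_sumr; apply: eq_bigr => q _.
by rewrite mulr_sumr; apply: eq_bigr => v _; rewrite mulrA.
Qed.

Lemma inV_SN x : inV_S x -> inV_S (- x).
Proof.
move=> h; apply: inV_S_ext (inV_SZ (-1) h) => s.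
by rewrite !ffunE mulN1r.
Qed.

Lemma inV_Sgen (g : 'S_n) (q : option 'I_n) (v : {set 'I_n}) : v \in porbits g -> inV_S (vass g q v).
Proof.
move=> hv; exists (fun g' q' v' => ((g' == g) && (q' == q) && (v' == v))%:R) => s.
rewrite (bigD1 g) //= [X in _ + X]big1 ?addr0; last first.
  move=> g' hg; rewrite (negbTE hg) big1 // => q' _; rewrite big1 // => v' _.
  by rewrite mul0r.
rewrite (bigD1 q) //= [X in _ + X]big1 ?addr0; last first.
  move=> q' hq; rewrite (negbTE hq) big1 // => v' _.
  by rewrite andbF mul0r.
rewrite (bigD1 v) //= [X in _ + X]big1 ?addr0; last first.
  move=> v' /andP[_ hv']; rewrite (negbTE hv').
  by rewrite andbF mul0r.
by rewrite !eqxx mul1r.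
Qed.

Lemma inV_S_sum (I : finType) (P : pred I) (F : I -> gpalg n.+1) :
  (forall i, P i -> inV_S (F i)) -> inV_S (\sum_(i | P i) F i).
Proof.
move=> h; apply: (big_ind (fun x : gpalg n.+1 => inV_S x)) => //.
- exact: inV_S0.
- exact: inV_SD.
Qed.

End VS.

Lemma inV0 N : inV (0 : gpalg N).
Proof. by case: N => [|n] //=; exact: inV_S0. Qed.

Lemma inVD N (x y : gpalg N) : inV x -> inV y -> inV (x + y).
Proof. case: N x y => [|n] x y /=; [by move=> -> ->; rewrite addr0 | exact: inV_SD]. Qed.

Lemma inVN N (x : gpalg N) : inV x -> inV (- x).
Proof. case: N x => [|n] x /=; [by move=> ->; rewrite oppr0 | exact: inV_SN]. Qed.

Definition castG N1 N2 (e : N1 = N2) (x : gpalg N1) : gpalg N2 :=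
  [ffun s => x (cast_perm (esym e) s)].

Lemma inV_uncast N1 N2 (e : N1 = N2) (z : gpalg N1) : inV (castG e z) -> inV z.
Proof.
case: N2 / e; suff -> : castG erefl z = z by [].
by apply/ffunP => s; rewrite ffunE cast_perm_id.
Qed.

Lemma concatL_pt m m' (a : 'S_m) (b : 'S_m') : concatL (pt a) (pt b) = pt (concat a b).
Proof.
change (@eq {ffun 'S_(m + m') -> algC} (concatL (pt a) (pt b)) (pt (concat a b))).
apply/ffunP => s; rewrite !ffunE (bigD1 a) //= [X in _ + X]big1 ?addr0; last first.
  by move=> a' ha; rewrite big1 // => b' _; rewrite ffunE (negbTE ha) !mul0r.
rewrite (bigD1 b) //= [X in _ + X]big1 ?addr0; last first.
  by move=> b' hb; rewrite !ffunE (negbTE hb) mulr0 mul0r.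
by rewrite !ffunE !eqxx !mul1r eq_sym.
Qed.

Lemma concatL_diff m m' (x x' : gpalg m) (y y' : gpalg m') :
  concatL x y - concatL x' y' = concatL (x - x') y + concatL x' (y - y').
Proof.
change (@eq {ffun 'S_(m + m') -> algC} (concatL x y - concatL x' y') (concatL (x - x') y + concatL x' (y - y'))).
apply/ffunP => s; rewrite !ffunE -sumrB -big_split; apply: eq_bigr => a _.
rewrite -sumrB -big_split; apply: eq_bigr => b _.
rewrite !ffunE /=; ring.
Qed.

Lemma concat_lshift m m' (a : 'S_m) (b : 'S_m') j :
  concat a b (lshift m' j) = lshift m' (a j).
Proof. by apply: val_inj; rewrite /= -[LHS]pfE pf_concat /= ltn_ord pfE. Qed.

Lemma concat_rshift m m' (a : 'S_m) (b : 'S_m') k :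
  concat a b (rshift m k) = rshift m (b k).
Proof.
apply: val_inj; rewrite /= -[LHS]pfE pf_concat /= ifN -?leqNgt ?leq_addr //.
by rewrite addKn pfE.
Qed.

Lemma concatX_l m m' (a : 'S_m) (b : 'S_m') i j :
  ((concat a b) ^+ i)%g (lshift m' j) = lshift m' ((a ^+ i)%g j).
Proof.
elim: i j => [|i IH] j; first by rewrite !expg0 !perm1.
by rewrite !expgS !permM concat_lshift IH.
Qed.

Lemma concatX_r m m' (a : 'S_m) (b : 'S_m') i j :
  ((concat a b) ^+ i)%g (rshift m j) = rshift m ((b ^+ i)%g j).
Proof.
elim: i j => [|i IH] j; first by rewrite !expg0 !perm1.
by rewrite !expgS !permM concat_rshift IH.
Qed.

Lemma porbits_l m m' (a : 'S_m) (b : 'S_m') v :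
  v \in porbits a -> lshift m' @: v \in porbits (concat a b).
Proof.
case/imsetP => j _ ->; suff -> : lshift m' @: porbit a j = porbit (concat a b) (lshift m' j).
  exact: imset_f.
apply/setP => y; apply/imsetP/porbitP.
  by case=> z /porbitP [i ->] ->; exists i; rewrite concatX_l.
by case=> i ->; exists ((a ^+ i)%g j); rewrite ?mem_porbit // concatX_l.
Qed.

Lemma porbits_r m m' (a : 'S_m) (b : 'S_m') v :
  v \in porbits b -> @rshift m _ @: v \in porbits (concat a b).
Proof.
case/imsetP => j _ ->; suff -> : @rshift m _ @: porbit b j = porbit (concat a b) (rshift m j).
  exact: imset_f.
apply/setP => y; apply/imsetP/porbitP.
  by case=> z /porbitP [i ->] ->; exists i; rewrite concatX_r.
by case=> i ->; exists ((b ^+ i)%g j); rewrite ?mem_porbit // concatX_r.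
Qed.

Lemma sum_pt N (A : 'S_N) (F : 'S_N -> algC) : \sum_a pt A a * F a = F A.
Proof.
rewrite (bigD1 A) //= [X in _ + X]big1 ?addr0; last first.
  by move=> a ha; rewrite ffunE (negbTE ha) mul0r.
by rewrite ffunE eqxx mul1r.
Qed.

Lemma unbump_lt h x : (x < h)%N -> unbump h x = x.
Proof. by move=> hx; rewrite /unbump ltnNge (ltnW hx) subn0. Qed.
Lemma unbump_gt h x : (h < x)%N -> unbump h x = x.-1.
Proof. by move=> hx; rewrite /unbump hx subn1. Qed.
Lemma bump_lt h x : (x < h)%N -> bump h x = x.
Proof. by move=> hx; rewrite /bump leqNgt hx. Qed.
Lemma bump_ge h x : (h <= x)%N -> bump h x = x.+1.
Proof. by move=> hx; rewrite /bump hx add1n. Qed.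

Lemma IDL n m' (g : 'S_n) q (t : 'I_n.+1) (t' : 'I_(n + m').+1) (b : 'S_m') :
  nat_of_ord t' = nat_of_ord t ->
  cast_perm (addSn n m') (concat (alpha_t g q t) b) =
  alpha_t (concat g b) (omap (lshift m') q) t'.
Proof.
move=> ht; apply: pf_inj => x hx.
have tn := ltn_ord t.
rewrite pf_cast pf_concat !pf_alpha pf_concat ht.
have qn : forall q0 : 'I_n, (q0 < n)%N by [].
case: q => [q0|] /=; rewrite ?concat_lshift /= ?ht;
move: (nat_of_ord t) tn => T tn;
(case: (ltnP x n.+1) => hxn;
 [ have [//|hxt] := eqVneq x T;
   (have -> : (unbump T x < n)%N by
     rewrite /unbump; move/eqP: hxt => hxt; case: (ltnP T x) => /= ?; lia); by []
 | have -> : (x == T) = false by apply/eqP; lia]);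
rewrite unbump_gt; try lia;
(try have -> : (Some (nat_of_ord q0) == Some x.-1) = false by apply/eqP => -[e]; move: (qn q0); lia);
(rewrite ifN -?leqNgt; last lia);
(rewrite bump_ge; last lia);
(have -> : (x - n.+1 = x.-1 - n)%N by lia); lia.
Qed.


Lemma IDR m n (a : 'S_m) (g : 'S_n) q (t : 'I_n.+1) (t' : 'I_(m + n).+1) :
  nat_of_ord t' = (m + nat_of_ord t)%N ->
  cast_perm (addnS m n) (concat a (alpha_t g q t)) =
  alpha_t (concat a g) (omap (@rshift m n) q) t'.
Proof.
move=> ht; apply: pf_inj => x hx.
have tn := ltn_ord t.
rewrite pf_cast pf_concat !pf_alpha pf_concat.
have qn : forall q0 : 'I_n, (q0 < n)%N by [].
have E : forall u v, (Some (m + u)%N == Some (m + v)%N) = (Some u == Some v).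
  by move=> u v; apply/eqP/eqP => [[/addnI ->]|[->]].
case: q => [q0|] /=; rewrite ?concat_rshift /= ?ht;
move: (nat_of_ord t) tn => T tn.
- case: (ltnP x m) => hxm.
    have -> : (x == m + T) = false by apply/eqP; lia.
    rewrite unbump_lt; last lia.
    have -> : (Some (m + q0)%N == Some x) = false by apply/eqP => -[e]; lia.
    rewrite hxm bump_lt //; have := pf_lt a hxm; lia.
  have -> : x = (m + (x - m))%N by lia.
  move: (x - m)%N => y.
  rewrite addKn eqn_add2l unbumpDl E ltnNge leq_addr /= addKn !bumpDl.
  by case: eqP => _ //; case: eqP.
- case: (ltnP x m) => hxm.
    have -> : (x == m + T) = false by apply/eqP; lia.
    rewrite unbump_lt; last lia.
    rewrite hxm bump_lt //; have := pf_lt a hxm; lia.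
  have -> : x = (m + (x - m))%N by lia.
  move: (x - m)%N => y.
  rewrite addKn eqn_add2l unbumpDl ltnNge leq_addr /= addKn !bumpDl.
  by case: eqP => _ //.
Qed.

Lemma cast_eq N1 N2 (e : N1 = N2) (X : 'S_N1) (s : 'S_N2) :
  (X == cast_perm (esym e) s) = (s == cast_perm e X).
Proof.
apply/eqP/eqP => [->|->]; first by rewrite cast_permKV.
by rewrite cast_permK.
Qed.

Lemma keyL n m' (g : 'S_n) q (v : {set 'I_n}) (b : 'S_m') (s : 'S_((n + m').+1)) :
  \sum_(a : 'S_n.+1) vass g q v a * (concat a b == cast_perm (esym (addSn n m')) s)%:R
  = vass (concat g b) (omap (lshift m') q) (lshift m' @: v) s.
Proof.
rewrite [RHS]ffunE big_imset /=; last by move=> i j _ _; apply: lshift_inj.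
transitivity (\sum_(a : 'S_n.+1) \sum_(i in v)
   (pt (alpha_t g q (gap_before i)) a * (concat a b == cast_perm (esym (addSn n m')) s)%:R
  - pt (alpha_t g q (gap_after i)) a * (concat a b == cast_perm (esym (addSn n m')) s)%:R)).
  by apply: eq_bigr => a _; rewrite ffunE big_distrl; apply: eq_bigr => i _; rewrite /= mulrBl.
rewrite exchange_big; apply: eq_bigr => i _; rewrite sumrB !sum_pt !ffunE.
rewrite !cast_eq.
rewrite (@IDL _ _ g q (gap_before i) (gap_before (lshift m' i)) b) //.
by rewrite (@IDL _ _ g q (gap_after i) (gap_after (lshift m' i)) b).
Qed.

Lemma keyR m n (a : 'S_m) (g : 'S_n) q (v : {set 'I_n}) (s : 'S_((m + n).+1)) :
  \sum_(b : 'S_n.+1) vass g q v b * (concat a b == cast_perm (esym (addnS m n)) s)%:R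
  = vass (concat a g) (omap (@rshift m n) q) (@rshift m n @: v) s.
Proof.
rewrite [RHS]ffunE big_imset /=; last by move=> i j _ _; apply: rshift_inj.
transitivity (\sum_(b : 'S_n.+1) \sum_(i in v)
   (pt (alpha_t g q (gap_before i)) b * (concat a b == cast_perm (esym (addnS m n)) s)%:R
  - pt (alpha_t g q (gap_after i)) b * (concat a b == cast_perm (esym (addnS m n)) s)%:R)).
  by apply: eq_bigr => b _; rewrite ffunE big_distrl; apply: eq_bigr => i _; rewrite /= mulrBl.
rewrite exchange_big; apply: eq_bigr => i _; rewrite sumrB !sum_pt !ffunE.
rewrite !cast_eq.
rewrite (@IDR _ _ a g q (gap_before i) (gap_before (rshift m i))) //.
rewrite (@IDR _ _ a g q (gap_after i) (gap_after (rshift m i))) //=.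
by rewrite /bump !add1n addnS.
Qed.

Lemma swap4 (X G Q V : finType) (P : G -> pred V) (F : X -> G -> Q -> V -> algC) :
  \sum_(x : X) \sum_(g : G) \sum_(q : Q) \sum_(v | P g v) F x g q v
  = \sum_(g : G) \sum_(q : Q) \sum_(v | P g v) \sum_(x : X) F x g q v.
Proof.
rewrite exchange_big; apply: eq_bigr => g _.
rewrite exchange_big; apply: eq_bigr => q _.
by rewrite exchange_big.
Qed.

Lemma sumG N (I : Type) (r : seq I) (P : pred I) (F : I -> gpalg N) s :
  (\sum_(i <- r | P i) F i) s = \sum_(i <- r | P i) F i s.
Proof. by elim/big_rec2: _ => // [|i _ y _ <-]; rewrite !ffunE. Qed.

Lemma reorg (A B G Q V : finType) (P : G -> pred V) (W : A -> algC)
  (f : A -> G -> Q -> V -> algC) (h : B -> algC) (C : A -> B -> algC) :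
  (forall a, W a = \sum_g \sum_q \sum_(v | P g v) f a g q v) ->
  \sum_a \sum_b W a * h b * C a b
  = \sum_g \sum_q \sum_(v | P g v) \sum_b \sum_a f a g q v * (h b * C a b).
Proof.
move=> hW.
transitivity (\sum_a \sum_g \sum_q \sum_(v | P g v) \sum_b f a g q v * (h b * C a b)).
  apply: eq_bigr => a _.
  transitivity (\sum_b \sum_g \sum_q \sum_(v | P g v) f a g q v * (h b * C a b)).
    apply: eq_bigr => b _; rewrite -mulrA hW big_distrl; apply: eq_bigr => g _.
    rewrite big_distrl; apply: eq_bigr => q _; by rewrite big_distrl.
  by rewrite (swap4 P (fun b g q v => f a g q v * (h b * C a b))).
rewrite (swap4 P (fun a g q v => \sum_b f a g q v * (h b * C a b))).
apply: eq_bigr => g _; apply: eq_bigr => q _; apply: eq_bigr => v _.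
by rewrite exchange_big.
Qed.

Lemma inV_concat_l n m' (w : gpalg n.+1) (y : gpalg m') :
  inV_S w -> inV (concatL w y).
Proof.
case=> c hc; apply: (@inV_uncast _ _ (addSn n m') (concatL w y)).
change (inV_S (castG (addSn n m') (concatL w y))).
pose F := \sum_(g : 'S_n) \sum_(q : option 'I_n) \sum_(v in porbits g) \sum_(b : 'S_m')
   [ffun s => (c g q v * y b) * vass (concat g b) (omap (lshift m') q) (lshift m' @: v) s].
apply: (@inV_S_ext _ _ F); last first.
  apply: inV_S_sum => g _; apply: inV_S_sum => q _; apply: inV_S_sum => v hv.
  apply: inV_S_sum => b _; apply: inV_SZ; apply: inV_Sgen; exact: porbits_l.
move=> s; rewrite /F !ffunE.
have sG := @sumG ((n+m').+1).
symmetry; rewrite sG; under eq_bigr => g _ do rewrite sG; under eq_bigr => g _ do under eq_bigr => q _ do rewrite sG.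
under eq_bigr => g _ do under eq_bigr => q _ do under eq_bigr => v _ do rewrite sG.
under eq_bigr => g _ do under eq_bigr => q _ do under eq_bigr => v _ do under eq_bigr => b _ do rewrite ffunE -keyL mulr_sumr.
symmetry.
rewrite (@reorg _ _ _ _ _ (fun g v => v \in porbits g) w
   (fun a g q v => c g q v * vass g q v a) y
   (fun a b => (concat a b == cast_perm (esym (addSn n m')) s)%:R) hc).
apply: eq_bigr => g _; apply: eq_bigr => q _; apply: eq_bigr => v _.
apply: eq_bigr => b _; apply: eq_bigr => a _.
rewrite /=; ring.
Qed.


Lemma reorg2 (A B G Q V : finType) (P : G -> pred V) (W : B -> algC)
  (f : B -> G -> Q -> V -> algC) (h : A -> algC) (C : A -> B -> algC) :
  (forall b, W b = \sum_g \sum_q \sum_(v | P g v) f b g q v) ->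
  \sum_a \sum_b h a * W b * C a b
  = \sum_g \sum_q \sum_(v | P g v) \sum_a \sum_b f b g q v * (h a * C a b).
Proof.
move=> hW.
transitivity (\sum_b \sum_a W b * h a * C a b).
  rewrite exchange_big; apply: eq_bigr => b _; apply: eq_bigr => a _.
  by rewrite (mulrC (h a)).
by rewrite (@reorg B A G Q V P W f h (fun b a => C a b) hW).
Qed.

Lemma inV_concat_r m n' (x : gpalg m) (w : gpalg n'.+1) :
  inV_S w -> inV (concatL x w).
Proof.
case=> c hc; apply: (@inV_uncast _ _ (addnS m n') (concatL x w)).
change (inV_S (castG (addnS m n') (concatL x w))).
pose F := \sum_(g : 'S_n') \sum_(q : option 'I_n') \sum_(v in porbits g) \sum_(a : 'S_m)
   [ffun s => (c g q v * x a) * vass (concat a g) (omap (@rshift m n') q) (@rshift m _ @: v) s].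
apply: (@inV_S_ext _ _ F); last first.
  apply: inV_S_sum => g _; apply: inV_S_sum => q _; apply: inV_S_sum => v hv.
  apply: inV_S_sum => a _; apply: inV_SZ; apply: inV_Sgen; exact: porbits_r.
move=> s; rewrite /F !ffunE.
have sG := @sumG ((m+n').+1).
symmetry; rewrite sG; under eq_bigr => g _ do rewrite sG; under eq_bigr => g _ do under eq_bigr => q _ do rewrite sG.
under eq_bigr => g _ do under eq_bigr => q _ do under eq_bigr => v _ do rewrite sG.
under eq_bigr => g _ do under eq_bigr => q _ do under eq_bigr => v _ do under eq_bigr => a _ do rewrite ffunE -keyR mulr_sumr.
symmetry.
rewrite (@reorg2 _ _ _ _ _ (fun g v => v \in porbits g) w
   (fun b g q v => c g q v * vass g q v b) x
   (fun a b => (concat a b == cast_perm (esym (addnS m n')) s)%:R) hc).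
apply: eq_bigr => g _; apply: eq_bigr => q _; apply: eq_bigr => v _.
apply: eq_bigr => a _; apply: eq_bigr => b _.
rewrite /=; ring.
Qed.

Lemma decomp n (a : 'S_n.+1) :
  exists (g : 'S_n) (q : option 'I_n), a = alpha_t g q ord_max.
Proof.
set p : 'I_n.+1 := ord_max.
set r := ((a^-1)%g p).
set a' := (tperm p r * a)%g.
have ap : a' p = p by rewrite /a' permM tpermL /r permKV.
have ne : forall i, a' (lift p i) != p.
  move=> i; apply/eqP => e; have : a' (lift p i) = a' p by rewrite e ap.
  by move/perm_inj => /eqP; rewrite eq_sym (negbTE (neq_lift _ _)).
pose gfun i := if unlift p (a' (lift p i)) is Some k then k else i.
have gK : forall i, lift p (gfun i) = a' (lift p i).
  move=> i; rewrite /gfun; case: unliftP => [k ->|e] //.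
  by move: (ne i); rewrite e eqxx.
have ginj : injective gfun.
  by move=> i j e; apply: (@lift_inj _ p); apply: (@perm_inj _ a'); rewrite -!gK e.
set g := perm ginj.
have Ea' : a' = lift_perm p p g.
  apply/permP => y; case: (unliftP p y) => [k|] ->.
    by rewrite lift_perm_lift -gK /g permE.
  by rewrite lift_perm_id ap.
exists g; case: (unliftP p r) => [q0 hr|hr].
  exists (Some q0); rewrite /alpha_t -Ea' -hr /a' mulgA tperm2 mul1g //.
exists None; rewrite /alpha_t -Ea' /a' hr tperm1 mul1g //.
Qed.

Lemma conj_sigma n (g : 'S_n) q :
  ((alpha_t g q ord_max) ^ sigma n.+1)%g = alpha_t g q ord0.
Proof.
apply: (mulgI (sigma n.+1)); rewrite conjgE !mulgA mulgV mul1g.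
apply: pf_inj => x hx; rewrite !pfM pf_sigma (pf_lt _ hx) pf_sigma hx /= !pf_alpha.
change (nat_of_ord (@ord_max n)) with n; change (nat_of_ord (@ord0 n)) with 0%N.
have qn : forall q0 : 'I_n, (q0 < n)%N by [].
have gl : forall k, (k < n)%N -> (pf g k < n)%N by move=> k hk; apply: pf_lt.
have [->|hxn] := eqVneq x n.
  rewrite modnn /=.
  case: q => [q0|] /=; last by rewrite modnn.
  rewrite bump_lt ?pfE ?ltn_ord // modn_small; last by rewrite ltnS.
  by rewrite /bump /= add1n.
have xn : (x < n)%N by move/eqP in hxn; lia.
have E1 : \val (@ord_max n) = n by [].
have E0 : \val (@ord0 n) = 0%N by [].
rewrite E1 E0 (unbump_lt xn) (@modn_small x.+1 n.+1); last lia.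
have -> : (x.+1 == 0%N) = false by [].
rewrite /unbump /= subn1 /=.
case: eqP => _.
  by rewrite modnn.
rewrite bump_lt ?gl // modn_small; last by have := gl _ xn; lia.
by rewrite /bump /= add1n.
Qed.

Lemma sum_porbits n (g : 'S_n) (F : 'I_n -> algC) :
  \sum_(v in porbits g) \sum_(i in v) F i = \sum_i F i.
Proof.
rewrite (partition_big (porbit g) (mem (porbits g))) /=; last first.
  by move=> i _; apply: imset_f.
apply: eq_bigr => v /imsetP [x _ ->]; apply: eq_bigl => i.
by rewrite eq_porbit_mem.
Qed.

Lemma telesc n (f : 'I_n.+1 -> algC) :
  \sum_(i : 'I_n) (f (gap_before i) - f (gap_after i)) = f ord0 - f ord_max.
Proof.
pose F k := f (inord k).
transitivity (\sum_(0 <= k < n) - (F k.+1 - F k)).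
  rewrite big_mkord; apply: eq_bigr => i _; rewrite opprB /F.
  congr (f _ - f _); apply: val_inj; rewrite /= inordK //=.
    by rewrite ltnS ltnW.
  by rewrite ltnS.
rewrite sumrN telescope_sumr // opprB /F.
congr (f _ - f _); apply: val_inj; rewrite /= inordK //.
Qed.

Lemma rot1 n (a : 'S_n.+1) : inV_S (pt a - pt (a ^ sigma n.+1)%g).
Proof.
have [g [q ->]] := decomp a; rewrite conj_sigma.
have h : inV_S (- \sum_(v in porbits g) vass g q v).
  by apply: inV_SN; apply: inV_S_sum => v hv; apply: inV_Sgen.
apply: (inV_S_ext _ h) => s.
rewrite !ffunE (@sumG n.+1).
transitivity (- \sum_(v in porbits g) \sum_(i in v)
   (pt (alpha_t g q (gap_before i)) s - pt (alpha_t g q (gap_after i)) s)); last first.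
  by congr (- _); apply: eq_bigr => v _; rewrite ffunE.
rewrite sum_porbits (telesc (fun t => pt (alpha_t g q t) s)) opprB.
by rewrite !ffunE.
Qed.

Lemma concatL0l m m' (y : gpalg m') : concatL (0 : gpalg m) y = 0.
Proof.
change (@eq {ffun 'S_(m + m') -> algC} (concatL 0 y) 0).
apply/ffunP => s; rewrite !ffunE big1 // => a _; rewrite big1 // => b _.
by rewrite ffunE !mul0r.
Qed.

Lemma concatL0r m m' (x : gpalg m) : concatL x (0 : gpalg m') = 0.
Proof.
change (@eq {ffun 'S_(m + m') -> algC} (concatL x 0) 0).
apply/ffunP => s; rewrite !ffunE big1 // => a _; rewrite big1 // => b _.
by rewrite ffunE mulr0 mul0r.
Qed.

Lemma inV_cl m m' (w : gpalg m) (y : gpalg m') : inV w -> inV (concatL w y).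
Proof.
case: m w => [|n] w /=; last exact: inV_concat_l.
by move=> ->; rewrite concatL0l; apply: inV0.
Qed.

Lemma inV_cr m m' (x : gpalg m) (w : gpalg m') : inV w -> inV (concatL x w).
Proof.
case: m' w => [|n] w /=; last exact: inV_concat_r.
by move=> ->; rewrite concatL0r; apply: inV0.
Qed.

Lemma part1 m m' (x x' : gpalg m) (y y' : gpalg m') :
  eqH x x' -> eqH y y' -> eqH (concatL x y) (concatL x' y').
Proof.
rewrite /eqH concatL_diff => hx hy; apply: inVD.
  exact: inV_cl.
exact: inV_cr.
Qed.

Lemma rotk m (a : 'S_m) k : eqH (pt a) (pt (a ^ (sigma m ^+ k))%g).
Proof.
elim: k => [|k IH].
  by rewrite /eqH expg0 conjg1 subrr; apply: inV0.
rewrite /eqH expgSr conjgM.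
have -> : pt a - pt ((a ^ (sigma m ^+ k)) ^ sigma m)%g =
  (pt a - pt (a ^ (sigma m ^+ k))%g) + (pt (a ^ (sigma m ^+ k))%g - pt ((a ^ (sigma m ^+ k)) ^ sigma m)%g).
  by rewrite addrA subrK.
apply: inVD; first exact: IH.
case: m a {IH} => [|n] a.
  by rewrite [X in pt X - _]permS0 [X in _ - pt X]permS0 subrr; apply: inV0.
exact: rot1.
Qed.

Unset Implicit Arguments.

Theorem proposition14 (m m' : nat) :
  (forall (x x' : gpalg m) (y y' : gpalg m'),
      eqH x x' -> eqH y y' -> eqH (concatL x y) (concatL x' y'))
  /\
  (forall (a : 'S_m) (b : 'S_m') (k l : nat),
      eqH (pt (concat a b))
          (pt (concat (a ^ (sigma m ^+ k))%g (b ^ (sigma m' ^+ l))%g))).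
Proof.
split; first exact: part1.
move=> a b k l; rewrite -!concatL_pt; apply: part1; exact: rotk.
Qed.
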